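(* Let $\vec\sigma$ be a state assemblage on $\mathcal H_B$ with reduced state $\zeta$. For a linear map $\mathcal E$ on the operators on $\mathcal H_B$ with $p(\omega):=\mathrm{tr}[\mathcal E(\zeta)]>0$, write $\mathcal E(\vec\sigma)/p(\omega)$ for the state assemblage $\{\mathcal E(\sigma_{a|x})/p(\omega)\}_{a,x}$. Then $$\sup_{\mathcal E\in\mathrm{LF}_1,\ p(\omega)>0}\mathbb{SR}\left(\frac{\mathcal E(\vec\sigma)}{p(\omega)}\right)=\sup_{\mathcal E\in\mathrm{LF},\ p(\omega)>0}\mathbb{SR}\left(\frac{\mathcal E(\vec\sigma)}{p(\omega)}\right),$$ i.e. local filters with a single Kraus operator achieve the same maximal steering robustness as arbitrary local filters.
   Context: All Hilbert spaces are finite-dimensional. A measurement assemblage (MA) on $\mathcal H$ is a family $\vec M=\{M_{a|x}\}_{a,x}$, with $x$ ranging over a finite input set and $a$ over a finite outcome set $\mathcal A$, such that for each $x$, $\{M_{a|x}\}_a$ is a POVM. A state assemblage (SA) on $\mathcal H$ is a family $\vec\sigma=\{\sigma_{a|x}\}_{a,x}$ of positive semidefinite operators such that $\sum_a\sigma_{a|x}=\rho$ is independent of $x$ and $\mathrm{tr}\rho=1$; $\rho$ is called its reduced state. $\vec\sigma$ admits a local hidden state model, written $\vec\sigma\in\mathbb{LHS}$, if $\sigma_{a|x}=\sum_\lambda p(\lambda)p(a|x,\lambda)\rho_\lambda$ for some finite probability distribution $p(\lambda)$, conditional distributions $p(a|x,\lambda)$ and density operators $\rho_\lambda$. The steering robustness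 is $\mathbb{SR}(\vec\sigma)=\min\{t\ge0:\exists$ SA $\vec\xi$ and $\vec\tau\in\mathbb{LHS}$ with $(\sigma_{a|x}+t\xi_{a|x})/(1+t)=\tau_{a|x}\ \forall a,x\}$. $\mathrm{LF}$ denotes the set of local filters: completely positive, trace-non-increasing linear maps on the operators on $\mathcal H_B$. $\mathrm{LF}_1\subset\mathrm{LF}$ denotes the filters with a single Kraus operator, $\mathcal E(\cdot)=K(\cdot)K^\dagger$ with $K^\dagger K\le\mathbb 1$. *)

(* Defs.v *)
From HB Require Import structures.
From mathcomp Require Import all_boot all_order all_algebra.
From mathcomp Require Import complex.
From mathcomp Require Import all_classical all_reals all_analysis.
Set Implicit Arguments.
Unset Strict Implicit.
Unset Printing Implicit Defensive.
Import Order.TTheory GRing.Theory Num.Theory.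
Local Open Scope ring_scope.
Local Open Scope classical_set_scope.

Section QDefs.
Variable R : realType.
Local Notation C := R[i].

Definition adj (m n : nat) (M : 'M[C]_(m, n)) : 'M[C]_(n, m) :=
  (map_mx Num.conj M)^T.

(* Positive semidefinite operator on C^n: <v, M v> >= 0 for all v
   (over the complex field, 0 <= z means z real and nonnegative). *)
Definition psd (n : nat) (M : 'M[C]_n) : Prop :=
  forall v : 'cV[C]_n, 0 <= (adj v *m M *m v) ord0 ord0.

Definition loewner_le (n : nat) (A B : 'M[C]_n) : Prop := psd (B - A).

Definition density (n : nat) (rho : 'M[C]_n) : Prop :=
  psd rho /\ \tr rho = 1.

(* C^k (x) C^n is 'M_(k*n), indices via mxvec_index (i, r);
   pair_of_index is its inverse. *)
Definition pair_of_index (k n : nat) (p : 'I_(k * n)) : 'I_k * 'I_n :=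
  enum_val (cast_ord (esym (@mxvec_cast k n)) p).

Definition id_tensor (k n : nat) (E : 'M[C]_n -> 'M[C]_n)
  (Y : 'M[C]_(k * n)) : 'M[C]_(k * n) :=
  \matrix_(p, q)
    (let ir := pair_of_index p in
     let js := pair_of_index q in
     E (\matrix_(r, s) Y (mxvec_index ir.1 r) (mxvec_index js.1 s))
       ir.2 js.2).

Definition positive_map (n : nat) (E : 'M[C]_n -> 'M[C]_n) : Prop :=
  forall M, psd M -> psd (E M).

Definition completely_positive (n : nat) (E : 'M[C]_n -> 'M[C]_n) : Prop :=
  forall k : nat, forall Y : 'M[C]_(k * n), psd Y -> psd (id_tensor E Y).

Definition trace_nonincreasing (n : nat) (E : 'M[C]_n -> 'M[C]_n) : Prop :=
  forall M, psd M -> \tr (E M) <= \tr M.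

Definition LF (n : nat) (E : 'M[C]_n -> 'M[C]_n) : Prop :=
  linear E /\ completely_positive E /\ trace_nonincreasing E.

Definition LF1 (n : nat) (E : 'M[C]_n -> 'M[C]_n) : Prop :=
  LF E /\
  exists K : 'M[C]_n, loewner_le (adj K *m K) 1%:M /\
                      forall M, E M = K *m M *m adj K.

(* State assemblages sigma_{a|x}, x : X (inputs), a : A (outcomes). *)
Definition is_SA_red (X A : finType) (n : nat)
  (s : X -> A -> 'M[C]_n) (rho : 'M[C]_n) : Prop :=
  (forall x a, psd (s x a)) /\
  (forall x, \sum_(a : A) s x a = rho) /\ \tr rho = 1.

Definition is_SA (X A : finType) (n : nat) (s : X -> A -> 'M[C]_n) : Prop :=
  exists rho, is_SA_red s rho.

Definition LHS (X A : finType) (n : nat) (s : X -> A -> 'M[C]_n) : Prop :=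
  exists (m : nat) (p : 'I_m -> R) (q : 'I_m -> X -> A -> R)
         (rho : 'I_m -> 'M[C]_n),
    (forall l, 0 <= p l) /\ \sum_(l < m) p l = 1 /\
    (forall l x a, 0 <= q l x a) /\
    (forall l x, \sum_(a : A) q l x a = 1) /\
    (forall l, density (rho l)) /\
    (forall x a, s x a = \sum_(l < m) ((p l * q l x a)%:C)%C *: rho l).

(* Steering robustness, as an infimum in the extended reals
   (the paper's min; +oo if the feasible set were empty). *)
Definition SR (X A : finType) (n : nat) (s : X -> A -> 'M[C]_n) : \bar R :=
  ereal_inf [set (t%:E)%E | t in
    [set t : R | 0 <= t /\
      exists xi tau : X -> A -> 'M[C]_n,
        is_SA xi /\ LHS tau /\
        forall x a, ((1 + t)^-1)%:C%C *: (s x a + (t%:C)%C *: xi x a) = tau x a]].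

Definition filtered (X A : finType) (n : nat) (E : 'M[C]_n -> 'M[C]_n)
  (s : X -> A -> 'M[C]_n) (zeta : 'M[C]_n) : X -> A -> 'M[C]_n :=
  fun x a => (\tr (E zeta))^-1 *: E (s x a).

End QDefs.

(* Main.v *)
Require Import Defs.
From HB Require Import structures.
From mathcomp Require Import all_boot all_order all_algebra.
From mathcomp Require Import complex spectral.
From mathcomp Require Import all_classical all_reals all_analysis.
From mathcomp Require Import ring lra.
Import Order.TTheory GRing.Theory Num.Theory.
Set Implicit Arguments.
Unset Strict Implicit.
Unset Printing Implicit Defensive.
Local Open Scope ring_scope.

Section P1.
Variable R : realType.
Local Notation C := R[i].

Lemma cD (x y : C) : (x + y)^* = x^* + y^*. Proof. exact: rmorphD. Qed.
Lemma cM (x y : C) : (x * y)^* = x^* * y^*. Proof. exact: rmorphM. Qed.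
Lemma cB (x y : C) : (x - y)^* = x^* - y^*. Proof. exact: rmorphB. Qed.
Lemma cN (x : C) : (- x)^* = - x^*. Proof. exact: rmorphN. Qed.

Lemma adjE m n (M : 'M[C]_(m, n)) i j : adj M i j = (M j i)^*.
Proof. by rewrite /adj !mxE. Qed.

Lemma adj_mul m n p (A : 'M[C]_(m, n)) (B : 'M[C]_(n, p)) :
  adj (A *m B) = adj B *m adj A.
Proof.
apply/matrixP => i j; rewrite !mxE rmorph_sum; apply: eq_bigr => k _.
by rewrite !mxE rmorphM mulrC.
Qed.

Lemma adjK m n (M : 'M[C]_(m, n)) : adj (adj M) = M.
Proof. by apply/matrixP => i j; rewrite !adjE conjCK. Qed.

Lemma adjD m n (M N : 'M[C]_(m, n)) : adj (M + N) = adj M + adj N.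
Proof. by apply/matrixP => i j; rewrite !mxE rmorphD. Qed.

Lemma adjZ m n c (M : 'M[C]_(m, n)) : adj (c *: M) = c^* *: adj M.
Proof. by apply/matrixP => i j; rewrite !mxE rmorphM. Qed.

Lemma adj1 n : adj (1%:M : 'M[C]_n) = 1%:M.
Proof. by apply/matrixP => i j; rewrite !mxE eq_sym; case: eqP; rewrite ?conjC1 ?conjC0. Qed.

Lemma psdD n (M N : 'M[C]_n) : psd M -> psd N -> psd (M + N).
Proof. by move=> hM hN v; rewrite mulmxDr mulmxDl mxE addr_ge0. Qed.

Lemma psd0 n : psd (0 : 'M[C]_n).
Proof. by move=> v; rewrite mulmx0 mul0mx mxE. Qed.

Lemma psd_sum (I : Type) (r : seq I) (P : pred I) n (F : I -> 'M[C]_n) :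
  (forall i, P i -> psd (F i)) -> psd (\sum_(i <- r | P i) F i).
Proof.
move=> h; elim/big_ind: _ => //; [exact: psd0 | exact: psdD].
Qed.

Lemma psdZ n c (M : 'M[C]_n) : 0 <= c -> psd M -> psd (c *: M).
Proof. by move=> c0 hM v; rewrite -scalemxAr -scalemxAl mxE mulr_ge0. Qed.

Lemma psd_congr m n (B : 'M[C]_(m, n)) (M : 'M[C]_n) :
  psd M -> psd (B *m M *m adj B).
Proof.
move=> hM v; have := hM (adj B *m v).
by rewrite adj_mul adjK !mulmxA.
Qed.

Lemma psd1 n : psd (1%:M : 'M[C]_n).
Proof.
move=> v; rewrite mulmx1 mxE; apply: sumr_ge0 => i _.
by rewrite adjE mulrC mul_conjC_ge0.
Qed.

Lemma psd_gram m n (X : 'M[C]_(m, n)) : psd (X *m adj X).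
Proof. by have := psd_congr X (@psd1 n); rewrite mulmx1. Qed.

Lemma qf_delta n (M : 'M[C]_n) (a b : 'I_n) :
  (delta_mx (0:'I_1) a *m M *m delta_mx b (0:'I_1)) 0 0 = M a b.
Proof. by rewrite -rowE -colE !mxE. Qed.

Lemma qf_deltaM n (M : 'M[C]_n) (a b : 'I_n) :
  delta_mx (0:'I_1) a *m M *m delta_mx b (0:'I_1) = const_mx (M a b).
Proof. by apply/matrixP => x y; rewrite !ord1 qf_delta mxE. Qed.

Lemma adj_delta m n (i : 'I_m) (j : 'I_n) : adj (delta_mx i j : 'M[C]_(m,n)) = delta_mx j i.
Proof.
by apply/matrixP => a b; rewrite !mxE; case: (_ == _); case: (_ == _); rewrite /= ?conjC1 ?conjC0.
Qed.

Lemma psd_diag n (M : 'M[C]_n) i : psd M -> 0 <= M i i.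
Proof. by move=> /(_ (delta_mx i 0)); rewrite adj_delta qf_delta. Qed.

Lemma psd_tr n (M : 'M[C]_n) : psd M -> 0 <= \tr M.
Proof. by move=> h; apply: sumr_ge0 => i _; exact: psd_diag. Qed.

Lemma qf_two n (M : 'M[C]_n) (i j : 'I_n) (c : C) :
  (adj (delta_mx i (0:'I_1) + c *: delta_mx j 0) *m M *m (delta_mx i (0:'I_1) + c *: delta_mx j 0)) 0 0
  = M i i + c * M i j + c^* * M j i + c^* * c * M j j.
Proof.
rewrite adjD adjZ !adj_delta !mulmxDl !mulmxDr -!scalemxAl -!scalemxAr.
by rewrite !qf_deltaM !mxE; ring.
Qed.

Lemma ge0_conj (z : C) : 0 <= z -> z^* = z.
Proof. by move=> h; apply/CrealP; apply: ger0_real. Qed.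

Lemma psd_herm n (M : 'M[C]_n) i j : psd M -> M j i = (M i j)^*.
Proof.
move=> h.
have h1 := ge0_conj (h (delta_mx i 0 + 1 *: delta_mx j 0)).
have h2 := ge0_conj (h (delta_mx i 0 + 'i *: delta_mx j 0)).
rewrite qf_two in h1; rewrite qf_two in h2.
have di := ge0_conj (psd_diag i h); have dj := ge0_conj (psd_diag j h).
rewrite !cD !cM in h1 h2.
rewrite ?conjCK ?conjC1 ?conjCi ?mul1r ?mulr1 di dj in h1 h2.
move: h1 h2; set x := M i j; set y := M j i; set w := 'i.
move=> /eqP; rewrite -subr_eq0 => /eqP h1 /eqP; rewrite -subr_eq0 => /eqP h2.
have ii : w * w + 1 = 0 by rewrite /w -expr2 sqrCi addNr.
have e : 2 * (x - y^*) = 0.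
  transitivity (- (M i i + x^* + y^* + M j j - (M i i + x + y + M j j))
     + w * (M i i + - w * x^* + w * y^* + w * - w * M j j -
            (M i i + w * x + - w * y + - w * w * M j j))
     + (w * w + 1) * (x^* - y^* + x - y)); first by ring.
  by rewrite h1 h2 ii; ring.
have : x = y^*.
  apply/eqP; rewrite -subr_eq0; apply/eqP.
  by move/eqP: e; rewrite mulf_eq0 pnatr_eq0 /= => /eqP.
by move=> ->; rewrite conjCK.
Qed.

Lemma psd_tr0 n (M : 'M[C]_n) : psd M -> \tr M = 0 -> M = 0.
Proof.
move=> h t0.
have d0 : forall i, M i i = 0.
  move=> i; move/eqP: t0; rewrite psumr_eq0 => [/allP/(_ i (mem_index_enum _))|].
    by rewrite implyTb => /eqP.
  by move=> k _; exact: psd_diag.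
apply/matrixP => i j; rewrite mxE.
have := h (delta_mx i 0 + (- (M i j)^*) *: delta_mx j 0).
rewrite qf_two !d0 (psd_herm j i h) mulr0 addr0 add0r.
rewrite conjCK cN !mulNr -opprD oppr_ge0.
set y := M j i => hle.
have e : y * y^* + y * y^* = 0.
  apply/eqP; rewrite eq_le addr_ge0 ?mul_conjC_ge0 // andbT.
  by rewrite [X in _ + X]mulrC.
have : y * y^* = 0.
  by move/eqP: e; rewrite -mulr2n mulrn_eq0 /= => /eqP.
by move/eqP; rewrite mul_conjC_eq0 => /eqP ->; rewrite conjC0.
Qed.

End P1.

Section P2.
Variable R : realType.
Local Notation C := R[i].

Definition kmap n (K : 'M[C]_n) := fun M : 'M[C]_n => K *m M *m adj K.

Lemma kmap_linear n (K : 'M[C]_n) : linear (kmap K).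
Proof.
move=> a u v; rewrite /kmap mulmxDr mulmxDl.
by rewrite -scalemxAr -scalemxAl.
Qed.

Lemma pair_of_indexK k n (p : 'I_(k * n)) :
  mxvec_index (pair_of_index p).1 (pair_of_index p).2 = p.
Proof.
rewrite /mxvec_index /pair_of_index -surjective_pairing enum_valK.
by apply: val_inj.
Qed.

Lemma index_pairK k n (i : 'I_k) (j : 'I_n) :
  pair_of_index (mxvec_index i j) = (i, j).
Proof.
rewrite /mxvec_index /pair_of_index.
have -> : cast_ord (esym (mxvec_cast k n)) (cast_ord (mxvec_cast k n) (enum_rank (i, j)))
  = enum_rank (i, j) by apply: val_inj.
by rewrite enum_rankK.
Qed.

Lemma sum_index k n (V : nmodType) (F : 'I_(k * n) -> V) :
  \sum_p F p = \sum_i \sum_r F (mxvec_index i r).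
Proof.
rewrite pair_big /=.
rewrite (reindex (fun ir : 'I_k * 'I_n => mxvec_index ir.1 ir.2)) //.
exists (fun p => pair_of_index p) => [ir _ | p _] /=.
  by rewrite index_pairK -surjective_pairing.
by rewrite pair_of_indexK.
Qed.

Definition bmat k n (K : 'M[C]_n) : 'M[C]_(k * n) :=
  \matrix_(p, q) (if (pair_of_index p).1 == (pair_of_index q).1
                  then K (pair_of_index p).2 (pair_of_index q).2 else 0).

Lemma sum_if_eq (I : finType) (V : nmodType) (i : I) (F : I -> V) :
  \sum_j (if i == j then F j else 0) = F i.
Proof.
by rewrite -big_mkcond /=; under eq_bigl do rewrite eq_sym; rewrite big_pred1_eq.
Qed.

Lemma id_tensor_kmap k n (K : 'M[C]_n) (Y : 'M[C]_(k * n)) :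
  id_tensor (kmap K) Y = bmat k K *m Y *m adj (bmat k K).
Proof.
apply/matrixP => p q; rewrite !mxE.
rewrite -[p]pair_of_indexK -[q]pair_of_indexK.
set i := (pair_of_index p).1; set r := (pair_of_index p).2.
set j := (pair_of_index q).1; set s := (pair_of_index q).2.
rewrite !index_pairK /=.
rewrite sum_index; rewrite [RHS](eq_bigr (fun j' => \sum_t (\sum_u K r u * Y (mxvec_index i u) (mxvec_index j' t)) * (if j == j' then (K s t)^* else 0))); last first.
  move=> j' _; apply: eq_bigr => t _.
  rewrite !mxE !index_pairK /= sum_index.
  rewrite [X in X * _](eq_bigr (fun i' => if i == i' then \sum_u K r u * Y (mxvec_index i u) (mxvec_index j' t) else 0)); last first.
    move=> i' _; case: eqP => [<-|ne]; last first.
      by rewrite big1 // => u _; rewrite !mxE !index_pairK /=; move/eqP/negbTE: ne => ->; rewrite mul0r.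
    by apply: eq_bigr => u _; rewrite !mxE !index_pairK /= eqxx.
  by rewrite sum_if_eq; case: eqP => _ /=; rewrite ?conjC0.
rewrite (eq_bigr (fun j' => if j == j' then \sum_t (\sum_u K r u * Y (mxvec_index i u) (mxvec_index j' t)) * (K s t)^* else 0)); last first.
  by move=> j' _; case: eqP => _ //; rewrite big1 // => t _; rewrite mulr0.
by rewrite sum_if_eq /kmap; rewrite mxE; apply: eq_bigr => t _; rewrite !mxE; congr (_ * _); apply: eq_bigr => u _; rewrite mxE.
Qed.

Lemma kmap_CP n (K : 'M[C]_n) : completely_positive (kmap K).
Proof. by move=> k Y hY; rewrite id_tensor_kmap; exact: psd_congr. Qed.

Lemma kmap_psd n (K : 'M[C]_n) M : psd M -> psd (kmap K M).
Proof. exact: psd_congr. Qed.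

Lemma kmap_LF1 n (K : 'M[C]_n) :
  (forall M, psd M -> \tr (kmap K M) <= \tr M) -> LF1 (kmap K).
Proof.
move=> htr; split; first by split; [exact: kmap_linear | split; [exact: kmap_CP | exact: htr]].
exists K; split => //; rewrite /loewner_le => v.
have h0 := htr (v *m adj v) (psd_gram v).
rewrite /kmap mulmxA -(mulmxA (K *m v)) -adj_mul mxtrace_mulC in h0.
rewrite [X in _ <= X]mxtrace_mulC !trace_mx11 adj_mul -subr_ge0 in h0.
rewrite mulmxBr mulmxBl mulmx1 !mulmxA.
have -> : forall (A B : 'M[C]_1), (A - B) ord0 ord0 = A ord0 ord0 - B ord0 ord0.
  by move=> A B; rewrite !mxE.
by rewrite !mulmxA in h0.
Qed.

End P2.

Section P3.
Variable R : realType.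
Local Notation C := R[i].

Lemma tstar_adj m n (P : 'M[C]_(m, n)) : (P ^t Num.conj)%sesqui = adj P.
Proof. by apply/matrixP => i j; rewrite !mxE. Qed.

Lemma psd_adj n (M : 'M[C]_n) : psd M -> adj M = M.
Proof. by move=> h; apply/matrixP => i j; rewrite adjE (psd_herm i j h) conjCK. Qed.

Lemma linear_additive n (E : 'M[C]_n -> 'M[C]_n) :
  linear E -> (E 0 = 0) * (forall u v, E (u + v) = E u + E v)
              * (forall a u, E (a *: u) = a *: E u).
Proof.
move=> hE.
have E0 : E 0 = 0.
  have := hE 1 0 0; rewrite !scale1r addr0 => h.
  by apply: (@addrI _ (E 0) (E 0) 0); rewrite addr0 -h.
split; [split => // u v|move=> a u].
  by have := hE 1 u v; rewrite !scale1r.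
by have := hE a u 0; rewrite !addr0 E0 addr0.
Qed.

Lemma kraus_exists n (E : 'M[C]_n -> 'M[C]_n) :
  linear E -> completely_positive E ->
  exists Ks : 'I_(n * n) -> 'M[C]_n, forall M, E M = \sum_l kmap (Ks l) M.
Proof.
move=> hlin hcp.
have [[E0 ED] EZ] := linear_additive hlin.
pose u : 'cV[C]_(n * n) :=
  \col_p (if (pair_of_index p).1 == (pair_of_index p).2 then 1 else 0).
pose Y0 := u *m adj u.
have hY0 : psd Y0 by exact: psd_gram.
pose J := id_tensor E Y0.
have hJ : psd J by exact: hcp.
have Jidx : forall i j r s, J (mxvec_index i r) (mxvec_index j s) = E (delta_mx i j) r s.
  move=> i j r s; rewrite /J /id_tensor mxE !index_pairK /=; congr (E _ r s).
  apply/matrixP => a b; rewrite !mxE big_ord1 !mxE !index_pairK /=.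
  rewrite [a == i]eq_sym [b == j]eq_sym.
  by case: (i == a); case: (j == b); rewrite /= ?conjC1 ?conjC0 ?mulr1 ?mulr0 ?mul0r.
have Jadj : adj J = J by exact: psd_adj.
have Jn : J \is normalmx by apply/normalmxP; rewrite tstar_adj Jadj.
have /orthomx_spectralP Jeq := Jn.
set P := spectralmx J in Jeq; set d := spectral_diag J in Jeq.
have Pu : P *m adj P = 1%:M by rewrite -tstar_adj; apply/unitarymxP/spectral_unitarymx.
have Pinv : invmx P = adj P by rewrite -tstar_adj invmx_unitary // spectral_unitarymx.
rewrite Pinv in Jeq.
have dge0 : forall l, 0 <= d 0 l.
  move=> l; have := psd_diag l (psd_congr P hJ).
  by rewrite Jeq !mulmxA Pu mul1mx -mulmxA Pu mulmx1 mxE eqxx mulr1n.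
pose sq : 'rV[C]_(n * n) := \row_l sqrtC (d 0 l).
pose S := adj P *m diag_mx sq.
have SS : S *m adj S = J.
  rewrite /S adj_mul adjK.
  have -> : adj (diag_mx sq) = diag_mx sq.
    apply/matrixP => a b; rewrite adjE !mxE eq_sym.
    case: eqP => [->|]; rewrite ?mulr1n ?mulr0n ?conjC0 //.
    by apply: ge0_conj; rewrite sqrtC_ge0.
  rewrite -!mulmxA (mulmxA (diag_mx sq)) mulmx_diag.
  have -> : \row_j (sq 0 j * sq 0 j) = d.
    by apply/rowP => j; rewrite !mxE -expr2 sqrtCK.
  by rewrite Jeq mulmxA.
exists (fun l => \matrix_(r, i) S (mxvec_index i r) l) => M.
apply/matrixP => r s; rewrite summxE.
rewrite [in LHS](matrix_sum_delta M).
have Esum : forall (I : finType) (F : I -> 'M[C]_n), E (\sum_i F i) = \sum_i E (F i).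
  by move=> I F; apply: (big_morph E ED E0).
rewrite Esum summxE.
under eq_bigr do rewrite Esum summxE.
under eq_bigr do under eq_bigr do rewrite EZ mxE -Jidx -SS mxE.
under [RHS]eq_bigr do rewrite /kmap mxE.
under eq_bigr do under eq_bigr do rewrite big_distrr /=.
under [RHS]eq_bigr do under eq_bigr do rewrite !mxE big_distrl /=.
rewrite [RHS]exchange_big /=.
under [RHS]eq_bigr do rewrite exchange_big /=.
rewrite [RHS]exchange_big /=.
apply: eq_bigr => i _; apply: eq_bigr => j _; apply: eq_bigr => l _.
by rewrite !mxE; ring.
Qed.

End P3.

Section P4.
Variable R : realType.
Local Notation C := R[i].
Variables (X A : finType) (n : nat).
Local Notation M := 'M[C]_n.
Local Notation rc x := ((x%:C)%C : C).

Lemma rCD (x y : R) : (rc (x + y)) = (rc x) + (rc y). Proof. exact: rmorphD. Qed.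
Lemma rCB (x y : R) : (rc (x - y)) = (rc x) - (rc y). Proof. exact: rmorphB. Qed.
Lemma rCM (x y : R) : (rc (x * y)) = (rc x) * (rc y). Proof. exact: rmorphM. Qed.
Lemma rC1 : (rc (1 : R)) = 1. Proof. exact: rmorph1. Qed.
Lemma rC0 : (rc (0 : R)) = 0. Proof. exact: rmorph0. Qed.
Lemma rCsum (I : Type) (r : seq I) (P : pred I) (F : I -> R) :
  (rc (\sum_(i <- r | P i) F i)) = \sum_(i <- r | P i) (rc (F i)).
Proof. exact: rmorph_sum. Qed.
Lemma rC_ge0 (x : R) : (0 <= (rc x)) = (0 <= x).
Proof. exact: ler0c. Qed.

Definition feas (s : X -> A -> M) (t : R) : Prop :=
  0 <= t /\ exists xi tau : X -> A -> M,
        is_SA xi /\ Defs.LHS tau /\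
        forall x a, (rc ((1 + t)^-1)) *: (s x a + (rc t) *: xi x a) = tau x a.

Lemma SR_le (s : X -> A -> M) t : feas s t -> (SR s <= t%:E)%E.
Proof. by move=> h; apply: ereal_inf_lbound; exists t. Qed.

Lemma SR_lt (s : X -> A -> M) r : (SR s < r%:E)%E -> exists t, feas s t /\ t < r.
Proof. by move/ereal_inf_lt => [y [t ht <-]]; rewrite lte_fin => tr; exists t. Qed.

Lemma SR_ge0 (s : X -> A -> M) : (0 <= SR s)%E.
Proof. by apply: le_ereal_inf_tmp => y [t [t0 _] <-]; rewrite lee_fin. Qed.

Lemma SA_conv (L : finType) (P : pred L) (w : L -> R) (xs : L -> X -> A -> M) :
  (forall l, P l -> is_SA (xs l)) -> (forall l, P l -> 0 <= w l) ->
  \sum_(l | P l) w l = 1 ->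
  is_SA (fun x a => \sum_(l | P l) (rc (w l)) *: xs l x a).
Proof.
move=> hxs hw hsum.
have : forall l, exists rho : M, P l -> is_SA_red (xs l) rho.
  move=> l; case: (boolP (P l)) => Pl; last by exists 0.
  by have [rho hr] := hxs l Pl; exists rho.
case/boolp.choice => rho hrho.
exists (\sum_(l | P l) (rc (w l)) *: rho l); split; [|split].
- move=> x a; apply: psd_sum => l Pl; apply: psdZ; first by rewrite rC_ge0 hw.
  by have [h _] := hrho l Pl; exact: h.
- move=> x; rewrite exchange_big /=; apply: eq_bigr => l Pl.
  by rewrite -scaler_sumr; have [_ [h _]] := hrho l Pl; rewrite h.
- rewrite raddf_sum /=.
  under eq_bigr => l Pl do rewrite mxtraceZ (proj2 (proj2 (hrho l Pl))) mulr1.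
  by rewrite -rCsum hsum rC1.
Qed.

Lemma LHS_SA (tau : X -> A -> M) : Defs.LHS tau -> is_SA tau.
Proof.
move=> [m [p [q [rho [p0 [p1 [q0 [q1 [dens teq]]]]]]]]].
exists (\sum_l (rc (p l)) *: rho l); split; [|split].
- move=> x a; rewrite teq; apply: psd_sum => l _; apply: psdZ.
    by rewrite rC_ge0 mulr_ge0.
  by case: (dens l).
- move=> x; under eq_bigr do rewrite teq.
  rewrite exchange_big /=; apply: eq_bigr => l _.
  rewrite -scaler_suml -rCsum -big_distrr /= q1 mulr1 //.
- rewrite raddf_sum /=.
  under eq_bigr => l _ do rewrite mxtraceZ (proj2 (dens l)) mulr1.
  by rewrite -rCsum p1 rC1.
Qed.


Lemma sum_sigT (L : finType) (J : L -> finType) (V : nmodType)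
  (F : forall l, J l -> V) :
  \sum_(t : {l : L & J l}) F (tag t) (tagged t) = \sum_l \sum_(j : J l) F l j.
Proof. by rewrite sig_big_dep; apply: eq_bigl. Qed.

Lemma LHS_ofT (T : finType) (p : T -> R) (q : T -> X -> A -> R) (rho : T -> M)
  (tau : X -> A -> M) :
  (forall l, 0 <= p l) -> \sum_l p l = 1 ->
  (forall l x a, 0 <= q l x a) -> (forall l x, \sum_a q l x a = 1) ->
  (forall l, density (rho l)) ->
  (forall x a, tau x a = \sum_l (rc (p l * q l x a)) *: rho l) ->
  Defs.LHS tau.
Proof.
move=> p0 p1 q0 q1 dens teq.
have sE : forall (V : nmodType) (F : T -> V), \sum_l F l = \sum_(i < #|T|) F (enum_val i).
  by move=> V F; rewrite -(big_enum_val (A := T)); apply: eq_bigl => l; rewrite inE.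
exists #|T|, (fun i => p (enum_val i)), (fun i => q (enum_val i)), (fun i => rho (enum_val i)).
split => //; split; first by rewrite -sE.
split => //; split => //; split => // x a.
by rewrite teq sE.
Qed.

Record lhsw := LhsW { lm : nat; lp : 'I_lm -> R; lq : 'I_lm -> X -> A -> R;
                      lr : 'I_lm -> M }.
Arguments lp : clear implicits.
Arguments lq : clear implicits.
Arguments lr : clear implicits.

Lemma LHS_conv (L : finType) (P : pred L) (w : L -> R) (ts : L -> X -> A -> M) :
  (forall l, P l -> Defs.LHS (ts l)) -> (forall l, P l -> 0 <= w l) ->
  \sum_(l | P l) w l = 1 ->
  Defs.LHS (fun x a => \sum_(l | P l) (rc (w l)) *: ts l x a).
Proof.
move=> hts hw hsum.
have : forall l, exists W : lhsw,
   (forall i, 0 <= lp W i) /\ (forall i x a, 0 <= lq W i x a) /\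
   (forall i x, \sum_a lq W i x a = 1) /\ (forall i, density (lr W i)) /\
   (P l -> \sum_i lp W i = 1 /\
      forall x a, ts l x a = \sum_i (rc (lp W i * lq W i x a)) *: lr W i).
  move=> l; case: (boolP (P l)) => Pl; last first.
    exists (@LhsW 0 (fun _ => 0) (fun _ _ _ => 0) (fun _ => 0)).
    by split; [case|split; [case|split; [case|split; [case|]]]].
  have [m [p [q [rho [p0 [p1 [q0 [q1 [dens teq]]]]]]]]] := hts l Pl.
  by exists (LhsW p q rho).
case/boolp.choice => f hf.
pose wP l := if P l then w l else 0.
apply: (@LHS_ofT {l : L & 'I_(lm (f l))}
   (fun t => wP (tag t) * lp (f (tag t)) (tagged t))
   (fun t => lq (f (tag t)) (tagged t)) (fun t => lr (f (tag t)) (tagged t))).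
- move=> t; apply: mulr_ge0; last by have [h _] := hf (tag t); exact: h.
  by rewrite /wP; case: ifP => // Pl; exact: hw.
- rewrite (sum_sigT (fun l j => wP l * lp (f l) j)).
  rewrite -hsum [RHS]big_mkcond /=; apply: eq_bigr => l _.
  rewrite -big_distrr /= /wP; case: ifP => Pl; last by rewrite mul0r.
  by have [_ [_ [_ [_ h]]]] := hf l; rewrite (proj1 (h Pl)) mulr1.
- by move=> t x a; have [_ [h _]] := hf (tag t); exact: h.
- by move=> t x; have [_ [_ [h _]]] := hf (tag t); exact: h.
- by move=> t; have [_ [_ [_ [h _]]]] := hf (tag t); exact: h.
- move=> x a.
  rewrite (sum_sigT (fun l j => rc (wP l * lp (f l) j * lq (f l) j x a) *: lr (f l) j)).
  rewrite big_mkcond /=; apply: eq_bigr => l _.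
  rewrite /wP; case: ifP => Pl; last first.
    by rewrite big1 // => j _; rewrite !mul0r rC0 scale0r.
  have [_ [_ [_ [_ h]]]] := hf l; rewrite (proj2 (h Pl)) scaler_sumr.
  by apply: eq_bigr => j _; rewrite scalerA -rCM mulrA.
Qed.

Lemma feas_conv (L : finType) (P : pred L) (w : L -> R) (ss : L -> X -> A -> M) r :
  0 <= r -> (forall l, P l -> feas (ss l) r) -> (forall l, P l -> 0 <= w l) ->
  \sum_(l | P l) w l = 1 ->
  feas (fun x a => \sum_(l | P l) (rc (w l)) *: ss l x a) r.
Proof.
move=> r0 hss hw hsum.
have : forall l, exists pr : (X -> A -> M) * (X -> A -> M),
   P l -> is_SA pr.1 /\ Defs.LHS pr.2 /\
     forall x a, (rc ((1 + r)^-1)) *: (ss l x a + (rc r) *: pr.1 x a) = pr.2 x a.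
  move=> l; case: (boolP (P l)) => Pl; last by exists (fun _ _ => 0, fun _ _ => 0).
  by have [_ [xi [tau h]]] := hss l Pl; exists (xi, tau).
case/boolp.choice => f hf.
split => //.
exists (fun x a => \sum_(l | P l) (rc (w l)) *: (f l).1 x a).
exists (fun x a => \sum_(l | P l) (rc (w l)) *: (f l).2 x a).
split; first by apply: SA_conv => // l Pl; have [h _] := hf l Pl.
split; first by apply: LHS_conv => // l Pl; have [_ [h _]] := hf l Pl.
move=> x a; rewrite scaler_sumr -big_split /= scaler_sumr.
apply: eq_bigr => l Pl; have [_ [_ h]] := hf l Pl; rewrite -h.
rewrite !scalerA !scalerDr !scalerA; congr (_ + _); first by rewrite mulrC.
by congr (_ *: _); ring.
Qed.

Lemma feas_up (s : X -> A -> M) t r : feas s t -> t <= r -> feas s r.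
Proof.
move=> [t0 [xi [tau [hxi [htau heq]]]]] tr.
have [<-|ne] := eqVneq t r; first by split => //; exists xi, tau.
have rpos : 0 < r by apply: le_lt_trans t0 _; rewrite lt_neqAle ne tr.
split; first exact: ltW.
pose w (b : bool) := if b then t / r else (r - t) / r.
pose xs (b : bool) := if b then xi else tau.
exists (fun x a => \sum_(b | predT b) (rc (w b)) *: xs b x a), tau.
split.
  apply: SA_conv => [[] _|[] _|] //=.
  - exact: LHS_SA.
  - by rewrite /w divr_ge0 // ltW.
  - by rewrite /w divr_ge0 ?subr_ge0 // ltW.
  - by rewrite big_bool /w /=; field; exact: lt0r_neq0.
split => // x a.
have e : s x a + (rc t) *: xi x a = (rc (1 + t)) *: tau x a.
  rewrite -heq scalerA -rCM mulfV ?rC1 ?scale1r //.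
  by apply: lt0r_neq0; rewrite ltr_pwDl.
rewrite big_bool /= /w /xs.
have -> : (rc r) *: ((rc (t / r)) *: xi x a + (rc ((r - t) / r)) *: tau x a)
   = (rc t) *: xi x a + (rc (r - t)) *: tau x a.
  rewrite scalerDr !scalerA -!rCM.
  have -> : r * (t / r) = t by field; exact: lt0r_neq0.
  by have -> : r * ((r - t) / r) = r - t by field; exact: lt0r_neq0.
rewrite addrA e -scalerDl -rCD scalerA -rCM.
have hr1 : 1 + r != 0 by apply: lt0r_neq0; lra.
have -> : (1 + r)^-1 * (1 + t + (r - t)) = 1 by field.
by rewrite rC1 scale1r.
Qed.

Lemma SR_conv (L : finType) (P : pred L) (w : L -> R) (ss : L -> X -> A -> M) (s : \bar R) :
  (forall l, P l -> (SR (ss l) <= s)%E) -> (forall l, P l -> 0 <= w l) ->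
  \sum_(l | P l) w l = 1 ->
  (SR (fun x a => (\sum_(l | P l) (rc (w l)) *: ss l x a)%R) <= s)%E.
Proof.
move=> hss hw hsum.
have [l0 Pl0] : exists l, P l.
  apply: boolp.contrapT => hn; move: hsum; rewrite big_pred0 => [|l].
    by move/eqP; rewrite eq_sym oner_eq0.
  by apply/negbTE/negP => Pl; apply: hn; exists l.
case: s hss => [s0| |] hss; last 2 first.
- by rewrite leey.
- by have := le_trans (SR_ge0 (ss l0)) (hss l0 Pl0).
apply/lee_addgt0Pr => e e0.
have key : forall l, P l -> feas (ss l) (s0 + e).
  move=> l Pl; have : (SR (ss l) < (s0 + e)%:E)%E.
    by apply: le_lt_trans (hss l Pl) _; rewrite lte_fin ltrDl.
  move/SR_lt => [t [ht tlt]]; apply: feas_up ht (ltW tlt).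
have r0 : 0 <= s0 + e.
  have [t [[t0 _] _]] : exists t, feas (ss l0) t /\ true by exists (s0 + e); split => //; exact: key.
  by have [h _] := key l0 Pl0.
rewrite -EFinD; apply: SR_le; exact: feas_conv.
Qed.

End P4.

Local Notation rc x := ((x%:C)%C).

Lemma ge0_rc {R : realType} (z : R[i]) : 0 <= z -> exists k : R, z = rc k /\ 0 <= k.
Proof.
move=> z0; exists (complex.Re z); rewrite -ler0c RRe_real //; exact: ger0_real.
Qed.

Lemma kmap_sum (R : realType) n (K : 'M[R[i]]_n) (I : finType) (F : I -> 'M[R[i]]_n) :
  kmap K (\sum_i F i) = \sum_i kmap K (F i).
Proof. by rewrite /kmap mulmx_sumr mulmx_suml. Qed.

Lemma kmap_id_LF1 (R : realType) n : LF1 (kmap (1%:M : 'M[R[i]]_n)).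
Proof. by apply: kmap_LF1 => M _; rewrite /kmap adj1 mul1mx mulmx1. Qed.

Unset Implicit Arguments.
Local Open Scope classical_set_scope.

Theorem mainTheorem4 (R : realType) (X A : finType) (n : nat)
  (sigma : X -> A -> 'M[R[i]]_n) (zeta : 'M[R[i]]_n) :
  is_SA_red sigma zeta ->
  ereal_sup [set SR (filtered E sigma zeta) |
               E in [set E : 'M[R[i]]_n -> 'M[R[i]]_n |
                       LF1 E /\ 0 < \tr (E zeta)]]
  = ereal_sup [set SR (filtered E sigma zeta) |
               E in [set E : 'M[R[i]]_n -> 'M[R[i]]_n |
                       LF E /\ 0 < \tr (E zeta)]].
Proof.
move=> hsa; apply/eqP; rewrite eq_le; apply/andP; split.
  by apply: ereal_sup_le; apply: image_subset => E [[hLF _] hp]; split.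
apply: ge_ereal_sup => y [E [hLF hp] <-].
have [x0 _ | hX] := pickP (@predT X); last first.
  have -> : filtered E sigma zeta = filtered (kmap 1%:M) sigma zeta.
    by apply: funext => x; have := hX x.
  apply: ereal_sup_ubound; exists (kmap 1%:M) => //; split; first exact: kmap_id_LF1.
  by rewrite /kmap adj1 mul1mx mulmx1 (proj2 (proj2 hsa)) ltr01.
case: hsa => hpsd [hsum htr1].
have hz : psd zeta by rewrite -(hsum x0); apply: psd_sum => a _; exact: hpsd.
case: hLF => hlin [hcp htn].
have [Ks hK] := kraus_exists hlin hcp.
pose c l := \tr (kmap (Ks l) zeta).
have cge0 : forall l, 0 <= c l by move=> l; apply: psd_tr; apply: kmap_psd.
have cE : \tr (E zeta) = \sum_l c l by rewrite hK raddf_sum.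
have /boolp.choice [r hr] : forall l, exists k : R, c l = rc k /\ 0 <= k.
  by move=> l; apply: ge0_rc.
have [r0 [hr0 _]] := @ge0_rc R (\tr (E zeta)) (ltW hp).
have r0pos : 0 < r0 by rewrite -ltcR -hr0.
pose P l := 0 < r l.
pose w l := r l / r0.
pose ss l := filtered (kmap (Ks l)) sigma zeta.
have trle : forall l M, psd M -> \tr (kmap (Ks l) M) <= \tr M.
  move=> l M hM; apply: le_trans (htn M hM); rewrite hK raddf_sum /=.
  rewrite (bigD1 l) //= lerDl; apply: sumr_ge0 => l' _.
  by apply: psd_tr; apply: kmap_psd.
have zero : forall l x a, ~~ P l -> kmap (Ks l) (sigma x a) = 0.
  move=> l x a nP.
  have rl0 : r l = 0.
    by apply/eqP; rewrite eq_le (proj2 (hr l)) andbT; rewrite /P -leNgt in nP.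
  apply: psd_tr0; first by apply: kmap_psd.
  apply/eqP; rewrite eq_le psd_tr ?andbT; last by apply: kmap_psd.
  have : c l = 0 by rewrite (proj1 (hr l)) rl0 rmorph0.
  rewrite /c -(hsum x) kmap_sum raddf_sum (bigD1 a) //= => e.
  rewrite -e lerDl; apply: sumr_ge0 => a' _.
  by apply: psd_tr; apply: kmap_psd.
have feq : filtered E sigma zeta =
    (fun x a => (\sum_(l | P l) rc (w l) *: ss l x a)%R).
  apply: funext => x; apply: funext => a.
  rewrite /filtered (hK (sigma x a)) (bigID P) /= [X in _ + X]big1 ?addr0; last first.
    by move=> l nP; exact: zero.
  rewrite scaler_sumr; apply: eq_bigr => l Pl; rewrite /ss /filtered scalerA.
  congr (_ *: _); rewrite hr0 -/(c l) (proj1 (hr l)) /w.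
  rewrite rmorphM fmorphV /=; field.
  by apply/andP; split; rewrite eq_sym lt_eqF // ltcR.
rewrite feq; apply: SR_conv.
- move=> l Pl; apply: ereal_sup_ubound; exists (kmap (Ks l)) => //; split.
    by apply: kmap_LF1; exact: trle.
  by rewrite -/(c l) (proj1 (hr l)) ltcR.
- by move=> l _; rewrite /w divr_ge0 // ?(proj2 (hr l)) // ltW.
- have sr : \sum_l r l = r0.
    apply: complexI; rewrite rmorph_sum -hr0 cE; apply: eq_bigr => l _.
    by rewrite (proj1 (hr l)).
  have sP : \sum_(l | P l) r l = \sum_l r l.
    rewrite [RHS](bigID P) /= [X in _ + X]big1 ?addr0 // => l nP.
    by apply/eqP; rewrite eq_le (proj2 (hr l)) andbT; rewrite /P -leNgt in nP.
  by rewrite /w -mulr_suml sP sr divff // gt_eqF.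
Qed.
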